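(* Let $k$ be a number field, $r$ a nonzero integer, $R$ the localization of the ring of integers of $k$ at the powers of $r$, $K$ a field with an $R$-algebra structure, and $B(\mathbf y)=\sum_{\kappa=1}^3B^{(\kappa)}y_\kappa$ a symmetric $3\times3$ matrix of linear forms with coefficients in $R$. Assume that the projective plane curves $\det B(\mathbf y)=0$ and $\det B^\bullet(\mathbf x)=0$ are elliptic curves. Then the $3$-dimensional abelian subalgebras of $\mathfrak g_B(K)$ that are contained in $V=U\oplus W$ are exactly the subspaces $\psi(M)(U)$ for $M\in\mathrm{GL}_2(K)$.
   Context: Let $U=W=T=K^3$ with bases $e_1,e_2,e_3$, $f_1,f_2,f_3$, $g_1,g_2,g_3$; let $\phi:U\times W\to T$, $\phi(u,w)=\sum_\kappa (uB^{(\kappa)}w^{\mathrm T})g_\kappa$ (coordinates as row vectors). $\mathfrak g_B(K)$ is $U\oplus W\oplus T$ with bracket $[(u,w,t),(u',w',t')]=\phi(u,w')-\phi(u',w)\in T$. The bar map $U\to W$, $\sum u_je_j\mapsto\sum u_jf_j$, and its inverse $W\to U$ are both written $x\mapsto\bar x$. For $M=\begin{pmatrix}a&b\\c&d\end{pmatrix}\in\mathrm{GL}_2(K)$, $\psi(M)$ is the automorphism $(u,w,t)\mapsto(au+b\bar w,\,c\bar u+dw,\,(ad-bc)t)$ of $\mathfrak g_B(K)$. The dual matrix is $B^\bullet(\mathbf x)=\big(\sum_{j=1}^3B^{(\kappa)}_{ij}x_j\big)_{i\kappa}$. *)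

(* Defs.v *)
From HB Require Import structures.
From mathcomp Require Import all_boot all_order all_algebra all_field.
From mathcomp Require Import mpoly.
Set Implicit Arguments. Unset Strict Implicit. Unset Printing Implicit Defensive.
Import Order.TTheory GRing.Theory Num.Theory.
Local Open Scope ring_scope.

(* A number field k is modelled as a (finite-dimensional) field extension of Q,
   i.e. an [L : fieldExtType rat]. *)

Definition is_alg_int (L : fieldExtType rat) (x : L) : Prop :=
  exists p : {poly int}, p \is monic /\ root (map_poly (fun z : int => z%:~R) p) x.

Definition in_loc (L : fieldExtType rat) (r : int) (x : L) : Prop :=
  exists n : nat, is_alg_int ((r%:~R) ^+ n * x).

(* f : L -> F restricted to R is a (unital) ring homomorphism R -> F,
   i.e. F is an R-algebra via f. *)
Definition ring_hom_on_R (L : fieldExtType rat) (r : int) (F : nzRingType)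
    (f : L -> F) : Prop :=
  [/\ f 1 = 1,
      (forall x y, in_loc r x -> in_loc r y -> f (x + y) = f x + f y) &
      (forall x y, in_loc r x -> in_loc r y -> f (x * y) = f x * f y)].

Definition detB (F : comNzRingType) (B : 'I_3 -> 'M[F]_3) : {mpoly F[3]} :=
  \det (\matrix_(i < 3, j < 3) \sum_(k < 3) (B k i j)%:MP * 'X_k).

Definition detBdual (F : comNzRingType) (B : 'I_3 -> 'M[F]_3) : {mpoly F[3]} :=
  \det (\matrix_(i < 3, k < 3) \sum_(j < 3) (B k i j)%:MP * 'X_j).

(* the projective plane curve p = 0 (p a ternary form over an algebraically
   closed field) is nonsingular: no point of P^2 where p and all its partial
   derivatives vanish.  (If p = 0 identically, every point is singular.) *)
Definition nonsingular_plane_curve (F : closedFieldType) (p : {mpoly F[3]}) : Prop :=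
  forall v : 'I_3 -> F, (exists i, v i != 0) ->
    p.@[v] = 0 -> exists i : 'I_3, (mderiv i p).@[v] != 0.

(* The cubic over R defined by P(B) is an elliptic curve (smooth genus one
   curve over Spec R): every geometric fibre, i.e. the base change along every
   ring homomorphism R -> F with F algebraically closed, is a nonsingular plane
   cubic. *)
Definition elliptic_over_R (L : fieldExtType rat) (r : int)
    (P : forall F : comNzRingType, ('I_3 -> 'M[F]_3) -> {mpoly F[3]})
    (B : 'I_3 -> 'M[L]_3) : Prop :=
  forall (F : closedFieldType) (g : L -> F), ring_hom_on_R r g ->
    nonsingular_plane_curve (P F (fun k => map_mx g (B k))).

Definition gB (K : fieldType) := ('rV[K]_3 * 'rV[K]_3 * 'rV[K]_3)%type.

Definition phiB (K : fieldType) (B : 'I_3 -> 'M[K]_3) (u w : 'rV[K]_3) : 'rV[K]_3 :=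
  \row_(k < 3) (u *m B k *m w^T) 0 0.

Definition bracketB (K : fieldType) (B : 'I_3 -> 'M[K]_3) (x y : gB K) : gB K :=
  (0, 0, phiB B x.1.1 y.1.2 - phiB B y.1.1 x.1.2).

Definition abelian_subalgebra (K : fieldType) (B : 'I_3 -> 'M[K]_3)
    (S : {vspace gB K}) : Prop :=
  (forall x y, x \in S -> y \in S -> bracketB B x y \in S) /\
  (forall x y, x \in S -> y \in S -> bracketB B x y = 0).

Definition in_V (K : fieldType) (S : {vspace gB K}) : Prop :=
  forall x, x \in S -> x.2 = 0.

(* the bar maps U -> W, W -> U are the identity on coordinates, so
   psi(M)(u,w,t) = (a u + b wbar, c ubar + d w, (ad - bc) t) *)
Definition psiB (K : fieldType) (M : 'M[K]_2) (x : gB K) : gB K :=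
  (M 0 0 *: x.1.1 + M 0 1 *: x.1.2, M 1 0 *: x.1.1 + M 1 1 *: x.1.2,
   (M 0 0 * M 1 1 - M 0 1 * M 1 0) *: x.2).

(* Main.v *)
Require Import Defs.
From HB Require Import structures.
From mathcomp Require Import all_boot all_order all_algebra all_field.
From mathcomp Require Import mpoly closed_field ring zify.
From Stdlib Require Import ClassicalDescription IndefiniteDescription.
Set Implicit Arguments. Unset Strict Implicit. Unset Printing Implicit Defensive.
Import GRing.Theory.
Local Open Scope ring_scope.

Inductive expr := EGen of nat | EOne | EAdd of expr & expr | EOpp of expr
  | EMul of expr & expr | EInv of expr.

Fixpoint enc (e : expr) : GenTree.tree nat :=
  match e with
  | EGen n => GenTree.Leaf n
  | EOne => GenTree.Node 0 [::]
  | EAdd a b => GenTree.Node 1 [:: enc a; enc b]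
  | EOpp a => GenTree.Node 2 [:: enc a]
  | EMul a b => GenTree.Node 3 [:: enc a; enc b]
  | EInv a => GenTree.Node 4 [:: enc a]
  end.

Fixpoint dec (t : GenTree.tree nat) : option expr :=
  match t with
  | GenTree.Leaf n => Some (EGen n)
  | GenTree.Node 0 [::] => Some EOne
  | GenTree.Node 1 [:: a; b] =>
      match dec a, dec b with Some x, Some y => Some (EAdd x y) | _, _ => None end
  | GenTree.Node 2 [:: a] =>
      match dec a with Some x => Some (EOpp x) | _ => None end
  | GenTree.Node 3 [:: a; b] =>
      match dec a, dec b with Some x, Some y => Some (EMul x y) | _, _ => None end
  | GenTree.Node 4 [:: a] =>
      match dec a with Some x => Some (EInv x) | _ => None end
  | _ => None
  end.

Lemma encK : pcancel enc dec.
Proof. by elim=> //= [a -> b ->|a ->|a -> b ->|a ->]. Qed.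

HB.instance Definition _ := Countable.copy expr (pcan_type encK).

Section Sub.
Variables (K : fieldType) (gen : nat -> K).

Fixpoint evalE (e : expr) : K :=
  match e with
  | EGen n => gen n
  | EOne => 1
  | EAdd a b => evalE a + evalE b
  | EOpp a => - evalE a
  | EMul a b => evalE a * evalE b
  | EInv a => (evalE a)^-1
  end.

Definition inK1 : pred K := fun x =>
  if excluded_middle_informative (exists e, evalE e = x) then true else false.

Lemma inK1P x : reflect (exists e, evalE e = x) (inK1 x).
Proof. rewrite /inK1; case: excluded_middle_informative => h; constructor => //. Qed.

Lemma inK1_closed : GRing.divring_closed inK1.
Proof.
split.
- by apply/inK1P; exists EOne.
- move=> x y /inK1P[a <-] /inK1P[b <-]; apply/inK1P; by exists (EAdd a (EOpp b)).
- move=> x y /inK1P[a <-] /inK1P[b <-]; apply/inK1P; by exists (EMul a (EInv b)).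
Qed.

HB.instance Definition _ := GRing.isDivringClosed.Build K inK1 inK1_closed.

Record K1 := MkK1 { K1val :> K; K1valP : inK1 K1val }.
HB.instance Definition _ := [isSub for K1val].

Definition K1code (x : K1) : nat :=
  pickle (proj1_sig (constructive_indefinite_description _ (elimT (inK1P x) (K1valP x)))).
Definition K1uncode (n : nat) : option K1 :=
  match unpickle n with Some e => insub (evalE e) | None => None end.
Lemma K1codeK : pcancel K1code K1uncode.
Proof.
move=> x; rewrite /K1uncode /K1code pickleK.
case: constructive_indefinite_description => e /= ->.
by rewrite valK.
Qed.
HB.instance Definition _ := [Choice of K1 by <:].
HB.instance Definition _ := PCanIsCountable K1codeK.
HB.instance Definition _ := [SubChoice_isSubIntegralDomain of K1 by <:].
HB.instance Definition _ := [SubIntegralDomain_isSubField of K1 by <:].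

Lemma gen_in n : inK1 (gen n). Proof. by apply/inK1P; exists (EGen n). Qed.
End Sub.
Lemma det3 (R : comNzRingType) (A : 'M[R]_3) : \det A =
  A 0 0 * (A 1 1 * A 2 2 - A 1 2 * A 2 1)
  - A 0 1 * (A 1 0 * A 2 2 - A 1 2 * A 2 0)
  + A 0 2 * (A 1 0 * A 2 1 - A 1 1 * A 2 0).
Proof.
rewrite (expand_det_row _ 0) !big_ord_recl big_ord0 /cofactor.
rewrite !(expand_det_row _ 0) !big_ord_recl !big_ord0 /cofactor !det_mx11 !mxE /=.
pose a (i j : nat) := A (inord i) (inord j).
have E : forall i j : 'I_3, A i j = a i j by move=> i j; rewrite /a !inord_val.
by rewrite !E /= /bump /=; ring.
Qed.

Lemma dual_rank1 (F : closedFieldType) (BF : 'I_3 -> 'M[F]_3)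
  (ns : nonsingular_plane_curve (detBdual BF)) (x : 'rV[F]_3) (hx : x != 0)
  (c d : 'I_3 -> F) (hcd : forall i k, \sum_j BF k i j * x 0 j = c i * d k) : False.
Proof.
pose v := fun j => x 0 j.
have hv : exists i, v i != 0.
  apply/existsP; apply: contraR hx => /existsPn H; apply/eqP/rowP => j.
  by rewrite !mxE; apply/eqP; move: (H j); rewrite negbK.
set N := (\matrix_(i < 3, k < 3) \sum_(j < 3) (BF k i j)%:MP * 'X_j : 'M[{mpoly F[3]}]_3).
have Ev : forall i k, (N i k).@[v] = c i * d k.
  move=> i k; rewrite mxE -hcd raddf_sum; apply: eq_bigr => j _.
  by rewrite /= mevalM mevalC mevalXU.
have H0 : (detBdual BF).@[v] = 0.
  rewrite /detBdual -/N det3 !(mevalB, mevalD, mevalM) !Ev; ring.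
have [i] := ns v hv H0.
rewrite /detBdual -/N det3 !(mderivB, mderivD, mderivM) !(mevalB, mevalD, mevalM) !Ev.
set e := (X in X != 0); suff -> : e = 0 by rewrite eqxx.
rewrite /e; ring.
Qed.
Lemma rank1_factor (F : fieldType) (A : 'M[F]_3) : (\rank A <= 1)%N ->
  exists c d : 'I_3 -> F, forall i k, A i k = c i * d k.
Proof.
rewrite -{2}(mulmx_base A); move: (col_base A) (row_base A).
case: (\rank A) => [|[|//]] C R _.
  by exists (fun _ => 0), (fun _ => 0) => i k; rewrite mxE big_ord0 mul0r.
by exists (fun i => C i 0), (fun k => R 0 k) => i k; rewrite mxE big_ord1.
Qed.

Lemma mulBd (F : fieldType) (BF : 'I_3 -> 'M[F]_3) (Z : 'M[F]_3) (x : 'rV[F]_3) :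
  (forall k, Z *m BF k *m x^T = 0) ->
  Z *m (\matrix_(i < 3, k < 3) \sum_j BF k i j * x 0 j) = 0.
Proof.
move=> h; apply/matrixP => i k; rewrite [RHS]mxE.
have e := congr1 (fun M : 'M_(3,1) => M i 0) (h k); rewrite /= [RHS]mxE in e.
transitivity ((Z *m BF k *m x^T) i 0); last exact: e.
rewrite !mxE.
under eq_bigr do rewrite mxE big_distrr.
under [RHS]eq_bigr do rewrite !mxE big_distrl.
rewrite exchange_big; apply: eq_bigr => l _; apply: eq_bigr => m _.
exact: mulrA.
Qed.


Lemma nz_row (F : fieldType) m n (A : 'M[F]_(m, n)) : A != 0 -> exists i, row i A != 0.
Proof.
move=> hA; apply/existsP; apply: contraR hA => /existsPn H; apply/eqP/row_matrixP => i.
by rewrite row0; apply/eqP; move: (H i); rewrite negbK.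
Qed.

Lemma core_step (F : closedFieldType) (BF : 'I_3 -> 'M[F]_3)
  (ns : nonsingular_plane_curve (detBdual BF)) (Z : 'M[F]_3) (x : 'rV[F]_3) :
  x != 0 -> (1 < \rank Z)%N -> (forall k, Z *m BF k *m x^T = 0) -> False.
Proof.
move=> hx hZ h.
have hle := mulmx0_rank_max (mulBd h).
have ar : forall a b : nat, (a + b <= 3)%N -> (1 < a)%N -> (b <= 1)%N by move=> a b; lia.
have [c [d hcd]] := rank1_factor (ar _ _ hle hZ).
by apply: (dual_rank1 ns hx (c := c) (d := d)) => i k; rewrite -hcd mxE.
Qed.

Lemma core0 (F : closedFieldType) (BF : 'I_3 -> 'M[F]_3)
  (sym : forall k, (BF k)^T = BF k)
  (ns : nonsingular_plane_curve (detBdual BF)) (P Q : 'M[F]_3)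
  (hab : forall k, P *m BF k *m Q^T = Q *m BF k *m P^T)
  (hfree : row_free (row_mx P Q)) (z : 'rV[F]_3) (hz : z != 0) (hzP : z *m P = 0) :
  P = 0.
Proof.
apply/eqP; apply/negPn/negP => hP0.
set Km := kermx P; set Y := Km *m Q.
have PBY : forall k, P *m BF k *m Y^T = 0.
  move=> k; rewrite /Y trmx_mul mulmxA hab -!mulmxA -trmx_mul mulmx_ker trmx0.
  by rewrite !mulmx0.
have rK : \rank Km = (3 - \rank P)%N := mxrank_ker P.
have rY : \rank Y = \rank Km.
  by have := mxrankMfree Km hfree; rewrite mul_mx_row mulmx_ker rank_row_0mx.
have rP1 : (0 < \rank P)%N by rewrite lt0n mxrank_eq0.
have rP2 : (1 + \rank P <= 3)%N.
  by have := mulmx0_rank_max hzP; rewrite rank_rV hz.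
case: (ltnP 1 (\rank P)) => hr.
- have hY : Y != 0 by rewrite -mxrank_eq0 rY rK; lia.
  have [i hi] := nz_row hY.
  apply: (core_step ns hi hr) => k.
  by rewrite tr_row colE !mulmxA PBY mul0mx.
- have [i hi] := nz_row hP0.
  have hY : (1 < \rank Y)%N by rewrite rY rK; lia.
  apply: (core_step ns hi hY) => k.
  apply: trmx_inj; rewrite trmx_mul trmxK trmx_mul sym trmx0 mulmxA -row_mul.
  by rewrite -row_mul PBY row0.
Qed.

Lemma core (F : closedFieldType) (BF : 'I_3 -> 'M[F]_3)
  (sym : forall k, (BF k)^T = BF k)
  (ns : nonsingular_plane_curve (detBdual BF)) (P Q : 'M[F]_3)
  (hab : forall k, P *m BF k *m Q^T = Q *m BF k *m P^T)
  (hfree : row_free (row_mx P Q)) :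
  exists a c : F, ((a != 0) || (c != 0)) /\ c *: P = a *: Q.
Proof.
case: (boolP (P \in unitmx)) => hPu; last first.
  have : kermx P != 0 by rewrite kermx_eq0 row_free_unit.
  move/nz_row => [i hi].
  have hP := core0 sym ns hab hfree hi; rewrite -row_mul mulmx_ker row0 in hP.
  exists 0, 1; rewrite oner_neq0 orbT (hP erefl) scaler0 scale0r; split => //.
set A := invmx P *m Q.
have : size (char_poly A) != 1%N by rewrite size_char_poly.
move/closed_rootP => [lam hlam].
have : eigenvalue A lam by rewrite eigenvalue_root_char.
move/eigenvalueP => [y hy hy0].
set P' := lam *: P - Q.
have hab' : forall k, P' *m BF k *m P^T = P *m BF k *m P'^T.
  move=> k; rewrite /P' !mulmxBl -!scalemxAl -hab linearB /= linearZ /= mulmxBr.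
  by rewrite -scalemxAr.
have hfree' : row_free (row_mx P' P).
  apply: inj_row_free => v; rewrite mul_mx_row => /eqP.
  rewrite row_mx_eq0 => /andP[/eqP h1 /eqP h2].
  apply: (row_free_inj hfree); rewrite mul0mx mul_mx_row h2.
  move: h1; rewrite /P' mulmxBr -scalemxAr h2 scaler0 sub0r => /eqP.
  by rewrite oppr_eq0 => /eqP ->; rewrite row_mx0.
set z := y *m invmx P.
have hz : z != 0.
  apply: contraNneq hy0 => hz0; by rewrite -(mulmxKV hPu y) -/z hz0 mul0mx.
have hzP : z *m P' = 0.
  rewrite /P' mulmxBr -scalemxAr /z mulmxKV // -mulmxA -/A hy.
  by rewrite subrr.
have := core0 sym ns hab' hfree' hz hzP.
rewrite /P' => /eqP; rewrite subr_eq0 => /eqP hQ.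
exists 1, lam; by rewrite oner_neq0 scale1r hQ.
Qed.
Section VS.
Variable K : fieldType.

Definition pv (a c : K) (u : 'rV[K]_3) : gB K := (a *: u, c *: u, 0).

Lemma proj11_sum I (r : seq I) (P : pred I) (F : I -> gB K) :
  (\sum_(i <- r | P i) F i).1.1 = \sum_(i <- r | P i) (F i).1.1.
Proof. by apply: (big_morph (fun x : gB K => x.1.1)). Qed.
Lemma proj12_sum I (r : seq I) (P : pred I) (F : I -> gB K) :
  (\sum_(i <- r | P i) F i).1.2 = \sum_(i <- r | P i) (F i).1.2.
Proof. by apply: (big_morph (fun x : gB K => x.1.2)). Qed.
Lemma proj2_sum I (r : seq I) (P : pred I) (F : I -> gB K) :
  (\sum_(i <- r | P i) F i).2 = \sum_(i <- r | P i) (F i).2.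
Proof. by apply: (big_morph (fun x : gB K => x.2)). Qed.

Lemma gB_eq (x y : gB K) : x.1.1 = y.1.1 -> x.1.2 = y.1.2 -> x.2 = y.2 -> x = y.
Proof. by case: x => [[? ?] ?]; case: y => [[? ?] ?] /= -> -> ->. Qed.

Lemma pv_sum n (k : 'I_n -> K) (w : 'I_n -> 'rV[K]_3) a c :
  \sum_i k i *: pv a c (w i) = pv a c (\sum_i k i *: w i).
Proof.
apply: gB_eq; rewrite ?proj11_sum ?proj12_sum ?proj2_sum /=.
- by rewrite scaler_sumr; apply: eq_bigr => i _; rewrite !scalerA mulrC.
- by rewrite scaler_sumr; apply: eq_bigr => i _; rewrite !scalerA mulrC.
- by rewrite big1 // => i _; rewrite scaler0.
Qed.

Definition Tgen (a c : K) : 3.-tuple (gB K) := [tuple pv a c (delta_mx 0 i) | i < 3].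

Lemma memT a c x : x \in <<Tgen a c>>%VS <-> exists u, x = pv a c u.
Proof.
split.
  move=> /coord_span ->; eexists; rewrite (eq_bigr (fun i => coord (Tgen a c) i x *: pv a c (delta_mx 0 i))).
    by rewrite pv_sum.
  by move=> i _; rewrite /Tgen -tnth_nth tnth_mktuple.
move=> [u ->]; rewrite (row_sum_delta u) -pv_sum.
apply: rpred_sum => i _; apply: rpredZ; apply: memv_span.
by rewrite /Tgen; apply/tnthP; exists i; rewrite tnth_mktuple.
Qed.

Lemma freeT a c : (a != 0) || (c != 0) -> free (Tgen a c).
Proof.
move=> hac; apply/freeP => k.
rewrite (eq_bigr (fun i => k i *: pv a c (delta_mx 0 i))); last first.
  by move=> i _; rewrite /Tgen -tnth_nth tnth_mktuple.
rewrite pv_sum => /(congr1 (fun x : gB K => (x.1.1, x.1.2))) /= [h1 h2].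
set u := \sum_i _ in h1 h2.
have hu : u = 0.
  case/orP: hac => h.
    by move/eqP: h1; rewrite scaler_eq0 (negbTE h) /= => /eqP.
  by move/eqP: h2; rewrite scaler_eq0 (negbTE h) /= => /eqP.
move=> i; have := congr1 (fun v : 'rV_3 => v 0 i) hu.
rewrite /u summxE (bigD1 i) //= big1 ?addr0 => [|j hj]; rewrite !mxE ?eqxx ?mulr1 //.
by rewrite eq_sym (negbTE hj) mulr0.
Qed.

Lemma dimT a c : (a != 0) || (c != 0) -> \dim <<Tgen a c>>%VS = 3%N.
Proof. by move/freeT => /eqnP ->; rewrite size_tuple. Qed.

End VS.
Lemma exists_rel (L : fieldExtType rat) (r : int) (K : fieldType) (f : L -> K)
  (hf : ring_hom_on_R r f) (B : 'I_3 -> 'M[L]_3)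
  (hBsym : forall k, (B k)^T = B k) (hE2 : elliptic_over_R r detBdual B)
  (P Q : 'M[K]_3)
  (hab : forall k, P *m map_mx f (B k) *m Q^T = Q *m map_mx f (B k) *m P^T)
  (hfree : row_free (row_mx P Q)) :
  exists a c : K, ((a != 0) || (c != 0)) /\ c *: P = a *: Q.
Proof.
pose Gi := ((nat + ('I_3 * 'I_3)) + ('I_3 * 'I_3))%type.
pose decL (n : nat) : L := VectorInternalTheory.r2v (odflt 0 (unpickle n : option 'rV[rat]_(dim L))).
pose genT (s : Gi) : K := match s with
  | inl (inl n) => f (decL n) | inl (inr (i, j)) => P i j | inr (i, j) => Q i j end.
pose gen (n : nat) : K := if unpickle n is Some s then genT s else 0.
have gen_s : forall s, gen (pickle s) = genT s by move=> s; rewrite /gen pickleK.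
have inT : forall s, inK1 gen (genT s) by move=> s; rewrite -gen_s; apply: gen_in.
have fL_in : forall l, inK1 gen (f l).
  move=> l; have := inT (inl (inl (pickle (VectorInternalTheory.v2r l)))).
  by rewrite /genT /decL pickleK /= VectorInternalTheory.v2rK.
pose fL (l : L) : K1 gen := MkK1 (fL_in l).
pose P1 : 'M[K1 gen]_3 := \matrix_(i, j) MkK1 (inT (inl (inr (i, j)))).
pose Q1 : 'M[K1 gen]_3 := \matrix_(i, j) MkK1 (inT (inr (i, j))).
pose B1 k := map_mx fL (B k).
have eP : map_mx val P1 = P by apply/matrixP => i j; rewrite !mxE.
have eQ : map_mx val Q1 = Q by apply/matrixP => i j; rewrite !mxE.
have eB : forall k, map_mx val (B1 k) = map_mx f (B k).
  by move=> k; apply/matrixP => i j; rewrite !mxE.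
have [F [iota _]] := countable_algebraic_closure (K1 gen).
pose g (l : L) : F := iota (fL l).
case: hf => hf1 hfD hfM.
have fL1 : fL 1 = 1 by by apply: val_inj; rewrite /= hf1.
have hg : ring_hom_on_R r g.
  split; first by rewrite /g fL1 rmorph1.
    move=> x y hx hy; rewrite /g -rmorphD; congr (iota _); apply: val_inj.
    by rewrite /= hfD.
  move=> x y hx hy; rewrite /g -rmorphM; congr (iota _); apply: val_inj.
  by rewrite /= hfM.
pose BF k := map_mx g (B k).
have ns : nonsingular_plane_curve (detBdual BF) := hE2 F g hg.
have symF : forall k, (BF k)^T = BF k by move=> k; rewrite /BF map_trmx hBsym.
have eBF : forall k, BF k = map_mx iota (B1 k).
  by move=> k; apply/matrixP => i j; rewrite !mxE.
have hab1 : forall k, P1 *m B1 k *m Q1^T = Q1 *m B1 k *m P1^T.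
  move=> k; apply: (map_mx_inj (f := val)).
  by rewrite !map_mxM -!map_trmx eP eQ eB hab.
have hfree1 : row_free (row_mx P1 Q1).
  by rewrite /row_free -(mxrank_map val) map_row_mx eP eQ.
have habF : forall k, map_mx iota P1 *m BF k *m (map_mx iota Q1)^T =
    map_mx iota Q1 *m BF k *m (map_mx iota P1)^T.
  by move=> k; rewrite eBF !map_trmx -!map_mxM hab1.
have hfreeF : row_free (row_mx (map_mx iota P1) (map_mx iota Q1)).
  by rewrite /row_free -map_row_mx mxrank_map.
have [a [c [hac hrel]]] := core symF ns habF hfreeF.
have minF : forall i j i' j', iota (P1 i j * Q1 i' j') = iota (Q1 i j * P1 i' j').
  move=> i j i' j'; rewrite !rmorphM.
  have hr : forall i j, c * iota (P1 i j) = a * iota (Q1 i j).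
    by move=> i0 j0; have := congr1 (fun M : 'M[F]_3 => M i0 j0) hrel; rewrite !mxE.
  case: (eqVneq a 0) => ha.
    rewrite ha eq_refl /= in hac.
    have h0 : forall i j, iota (P1 i j) = 0.
      move=> i0 j0; have := hr i0 j0; rewrite ha mul0r => /eqP.
      by rewrite mulf_eq0 (negbTE hac) /= => /eqP.
    by rewrite !h0 mulr0 mul0r.
  have hq : forall i j, iota (Q1 i j) = c / a * iota (P1 i j).
    by move=> i0 j0; apply: (mulfI ha); rewrite -hr mulrA mulrCA divff // mulr1.
  by rewrite !hq mulrCA mulrA.
have minK : forall i j i' j', P i j * Q i' j' = Q i j * P i' j'.
  move=> i j i' j'; have := fmorph_inj iota (minF i j i' j').
  move/(congr1 val); rewrite !rmorphM /=.
  by rewrite -eP -eQ !mxE.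
case: (eqVneq P 0) => hP.
  by exists 0, 1; rewrite oner_neq0 orbT hP scaler0 scale0r.
have [i0 hi0] := nz_row hP.
have [j0 hj0] : exists j, P i0 j != 0.
  apply/existsP; apply: contraR hi0 => /existsPn H; apply/eqP/rowP => j.
  by rewrite !mxE; apply/eqP; move: (H j); rewrite negbK.
exists (P i0 j0), (Q i0 j0); rewrite hj0; split => //.
apply/matrixP => i j; rewrite !mxE.
by rewrite mulrC minK mulrC.
Qed.

Lemma det2 (R : comNzRingType) (A : 'M[R]_2) : \det A = A 0 0 * A 1 1 - A 0 1 * A 1 0.
Proof.
rewrite (expand_det_row _ 0) !big_ord_recl big_ord0 /cofactor !det_mx11 !mxE /=.
pose a (i j : nat) := A (inord i) (inord j).
have E : forall i j : 'I_2, A i j = a i j by move=> i j; rewrite /a !inord_val.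
by rewrite !E /= /bump /=; ring.
Qed.

Lemma entryABC (K : fieldType) (A B C : 'M[K]_3) i j :
  (A *m B *m C^T) i j = (row i A *m B *m (row j C)^T) 0 0.
Proof.
rewrite -row_mul !mxE; apply: eq_bigr => l _; by rewrite !mxE.
Qed.

Lemma tr00 (K : fieldType) (B : 'M[K]_3) (hB : B^T = B) (x y : 'rV[K]_3) :
  (x *m B *m y^T) 0 0 = (y *m B *m x^T) 0 0.
Proof.
transitivity ((x *m B *m y^T)^T 0 0); first by rewrite [RHS]mxE.
by rewrite !trmx_mul trmxK hB mulmxA.
Qed.

Unset Implicit Arguments.
Set Strict Implicit.

Theorem proposition4p10
  (L : fieldExtType rat) (r : int) (hr : r != 0)
  (K : fieldType) (f : L -> K) (hf : ring_hom_on_R r f)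
  (B : 'I_3 -> 'M[L]_3)
  (hBR : forall k i j, in_loc r (B k i j))
  (hBsym : forall k, (B k)^T = B k)
  (hE1 : elliptic_over_R r detB B)
  (hE2 : elliptic_over_R r detBdual B) :
  let BK := fun k => map_mx f (B k) in
  forall S : {vspace gB K},
    (\dim S = 3%N /\ in_V S /\ abelian_subalgebra BK S) <->
    (exists M : 'M[K]_2, M \in unitmx /\
       forall x : gB K, x \in S <-> exists u : 'rV[K]_3, x = psiB M (u, 0, 0)).
Proof.
move=> BK S.
have symK : forall k, (BK k)^T = BK k by move=> k; rewrite /BK map_trmx hBsym.
have psiE : forall (M : 'M[K]_2) u, psiB M (u, 0, 0) = pv (M 0 0) (M 1 0) u.
  by move=> M u; rewrite /psiB /pv /= !scaler0 !addr0.
have phiZ : forall a c u w, phiB BK (a *: u) (c *: w) = (a * c) *: phiB BK u w.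
  move=> a c u w; apply/rowP => k.
  by rewrite [LHS]mxE linearZ /= -!scalemxAl -scalemxAr scalerA !mxE.
have phiC : forall u w, phiB BK u w = phiB BK w u.
  by move=> u w; apply/rowP => k; rewrite [LHS]mxE [RHS]mxE (tr00 (symK k)).
split.
- move=> [d3 [hV [_ hab]]].
  set t := tcast d3 (vbasis S).
  have bS := vbasisP S.
  have spt : <<t>>%VS = S by rewrite /t val_tcast; exact: span_basis bS.
  have ft : free t by rewrite /t val_tcast; exact: basis_free bS.
  pose b (i : 'I_3) := t`_i.
  have bS' : forall i : 'I_3, b i \in S.
    by move=> i; rewrite -spt; apply: memv_span; apply: mem_nth; rewrite size_tuple.
  pose P := \matrix_(i < 3) (b i).1.1.
  pose Q := \matrix_(i < 3) (b i).1.2.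
  have hab' : forall k, P *m BK k *m Q^T = Q *m BK k *m P^T.
    move=> k; apply/matrixP => i j; rewrite !entryABC !rowK.
    have := hab _ _ (bS' i) (bS' j).
    rewrite /bracketB => /(congr1 (fun x : gB K => x.2 0 k)) /=.
    have hsub : forall (A C : 'rV[K]_3) k', (A - C) 0 k' = A 0 k' - C 0 k'.
      by move=> A C k'; rewrite !mxE.
    have phiE : forall u w, (phiB BK u w) 0 k = (u *m BK k *m w^T) 0 0.
      by move=> u w; rewrite mxE.
    rewrite hsub [RHS]mxE => /eqP; rewrite subr_eq0 !phiE => /eqP ->.
    by rewrite (tr00 (symK k)).
  have hfree : row_free (row_mx P Q).
    apply: inj_row_free => v; rewrite mul_mx_row => /eqP.
    rewrite row_mx_eq0 => /andP[/eqP h1 /eqP h2].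
    move/freeP: ft => ft.
    have hk := ft (fun i => v 0 i).
    apply/rowP => j; rewrite mxE; apply: hk.
    apply: gB_eq; rewrite ?proj11_sum ?proj12_sum ?proj2_sum /=.
    + transitivity (v *m P); last exact: h1.
      by rewrite mulmx_sum_row; apply: eq_bigr => i _; rewrite rowK.
    + transitivity (v *m Q); last exact: h2.
      by rewrite mulmx_sum_row; apply: eq_bigr => i _; rewrite rowK.
    + by rewrite big1 // => i _; rewrite (hV _ (bS' i)) scaler0.
  have [a [c [hac hrel]]] := exists_rel hf hBsym hE2 hab' hfree.
  have relS : forall x, x \in S -> c *: x.1.1 = a *: x.1.2.
    move=> x; rewrite -spt => /coord_span ->.
    pose lam := \row_i coord t i x.
    rewrite proj11_sum proj12_sum /=.
    have e1 : \sum_i coord t i x *: (t`_i).1.1 = lam *m P.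
      by rewrite mulmx_sum_row; apply: eq_bigr => i _; rewrite rowK mxE.
    have e2 : \sum_i coord t i x *: (t`_i).1.2 = lam *m Q.
      by rewrite mulmx_sum_row; apply: eq_bigr => i _; rewrite rowK mxE.
    by rewrite e1 e2 scalemxAr hrel -scalemxAr.
  pose x0 : K := (a == 0)%:R.
  pose y0 : K := (a != 0)%:R.
  pose M : 'M[K]_2 := \matrix_(i < 2, j < 2)
    if i == 0 then (if j == 0 then a else x0) else (if j == 0 then c else y0).
  have M00 : M 0 0 = a by rewrite mxE.
  have M10 : M 1 0 = c by rewrite mxE.
  exists M; split.
    rewrite unitmxE unitfE det2 !mxE /= /x0 /y0.
    case: (eqVneq a 0) => ha /=.
      by rewrite ha eqxx /= in hac; rewrite mulr0 mul1r sub0r oppr_eq0.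
    by rewrite mulr1 mul0r subr0.
  have eST : S = <<Tgen a c>>%VS.
    apply/eqP; rewrite eqEdim dimT // d3 leqnn andbT; apply/subvP => y hy.
    apply/memT.
    have y2 := hV _ hy; have ry := relS _ hy.
    case: (eqVneq a 0) => ha.
      rewrite ha eqxx /= in hac.
      exists (c^-1 *: y.1.2); apply: gB_eq => //=.
      + move: ry; rewrite ha !scale0r => /eqP; rewrite scaler_eq0 (negbTE hac) /=.
        by move/eqP.
      + by rewrite scalerA mulfV // scale1r.
    exists (a^-1 *: y.1.1); apply: gB_eq => //=.
    + by rewrite scalerA mulfV // scale1r.
    + by rewrite scalerA mulrC -scalerA ry scalerA mulVf // scale1r.
  move=> x; rewrite eST; split.
    by move=> /memT [u ->]; exists u; rewrite psiE M00 M10.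
  by move=> [u ->]; apply/memT; exists u; rewrite psiE M00 M10.
- move=> [M [hM hS]].
  set a := M 0 0; set c := M 1 0.
  have hac : (a != 0) || (c != 0).
    rewrite unitmxE unitfE det2 in hM; apply: contraNT hM.
    rewrite negb_or => /andP[/negPn/eqP ha /negPn/eqP hc].
    by rewrite -/a -/c ha hc mul0r mulr0 subrr.
  have eST : S = <<Tgen a c>>%VS.
    apply/vspaceP => x; apply/idP/idP => hx.
      by apply/memT; have [u ->] := (hS x).1 hx; exists u; exact: psiE.
    by apply/(hS x).2; have [u ->] := (memT _ _ _).1 hx; exists u; rewrite psiE.
  split; first by rewrite eST dimT.
  have brk0 : forall x y, x \in S -> y \in S -> bracketB BK x y = 0.
    move=> x y /(hS x)[u ->] /(hS y)[w ->]; rewrite !psiE /bracketB /pv /=.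
    by rewrite !phiZ (phiC w u) mulrC subrr.
  split.
    by move=> x /(hS x)[u ->]; rewrite /psiB /= scaler0.
  split => x y hx hy; last exact: brk0.
  by rewrite brk0 // mem0v.
Qed.
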